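(* Assume the operators $L_r:Lip_d(I)\to Lip_d(I)$, $r\in\mathbb{N}$, are uniformly bounded. Then the non-stationary fractal operator $\mathfrak{F}^\alpha_b:Lip_d(I)\to C(I)$, $\mathfrak{F}^\alpha_b(f)=f^\alpha_b$, is topologically bounded, i.e. it maps bounded sets to bounded sets.
   Context: Setting: $I=[x_0,x_N]$ with partition $\Delta: x_0<x_1<\dots<x_N$, $I_i=[x_{i-1},x_i]$, $l_i:I\to I_i$ the increasing affine bijection $l_i(x)=\frac{x_i-x_{i-1}}{x_N-x_0}x+\frac{x_Nx_{i-1}-x_0x_i}{x_N-x_0}$, and $Q_i=l_i^{-1}$. Scaling functions $\alpha_{i,r}:I\to\mathbb{R}$ ($i=1,\dots,N$, $r\in\mathbb{N}$) are continuous with $\|\alpha\|_\infty:=\sup_{r}\max_i\|\alpha_{i,r}\|_\infty<1$. $Lip_d(I)$ ($0<d\le1$) is the space of real functions $g$ on $I$ with $\sup_{x\ne y}|g(x)-g(y)|/|x-y|^d<\infty$, regarded as a subset of $C(I)$ with the supremum norm. $L_r:Lip_d(I)\to Lip_d(I)$ are operators (not necessarily linear) with $(L_rg)(x_0)=g(x_0)$, $(L_rg)(x_N)=g(x_N)$ for all $g$, and $\sup_r\|L_r\|_\infty<\infty$, where $\|L_r\|_\infty=\sup_{g\ne0}\|L_rg\|_\infty/\|g\|_\infty$. ''Uniformly bounded'' means: for every bounded $S\subset Lip_d(I)$, $\sup_r\sup_{g\in S}\|L_rg\|_\infty<\infty$. Non-stationary $\alpha$-fractal function: for $f\in C(I)$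 and base functions $b_r\in C(I)$ with $b_r(x_0)=f(x_0)$, $b_r(x_N)=f(x_N)$, $\sup_r\|b_r\|_\infty<\infty$, let $C_f(I)=\{g\in C(I):g(x_0)=f(x_0),g(x_N)=f(x_N)\}$ and $T^{\alpha_r}:C_f(I)\to C_f(I)$, $(T^{\alpha_r}g)(x)=f(x)+\alpha_{i,r}(Q_i(x))(g-b_r)(Q_i(x))$ for $x\in I_i$. For every $g\in C_f(I)$, $T^{\alpha_1}\circ\cdots\circ T^{\alpha_r}g$ converges uniformly to a function independent of $g$; this is the non-stationary $\alpha$-fractal function. $f^\alpha_b$ denotes it for $f\in Lip_d(I)$ with $b_r=L_rf$. *)

(* Defs.v *)
(* concrete reals R. Functions on I = [x 0, x N] are modelled as
   R -> R; only their values on I matter. *)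
From Stdlib Require Import Reals Lra.
Open Scope R_scope.

Definition inI (a b t : R) : Prop := a <= t <= b.

Definition cont_on (a b : R) (g : R -> R) : Prop :=
  forall t, inI a b t -> forall eps, 0 < eps ->
    exists delta, 0 < delta /\
      forall s, inI a b s -> Rabs (s - t) < delta -> Rabs (g s - g t) < eps.

Definition Lip (d a b : R) (g : R -> R) : Prop :=
  exists M, forall s t, inI a b s -> inI a b t -> s <> t ->
    Rabs (g s - g t) <= M * Rpower (Rabs (s - t)) d.

Definition bnd_on (a b : R) (g : R -> R) (B : R) : Prop :=
  forall t, inI a b t -> Rabs (g t) <= B.

Definition bounded_set (a b : R) (S : (R -> R) -> Prop) : Prop :=
  exists B, forall g, S g -> bnd_on a b g B.

Definition partition (x : nat -> R) (N : nat) : Prop :=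
  (1 <= N)%nat /\ forall i, (i < N)%nat -> x i < x (S i).

(* l_i : I -> I_i, and its inverse Q_i *)
Definition l_aff (x : nat -> R) (N i : nat) (t : R) : R :=
  (x i - x (pred i)) / (x N - x O) * t
  + (x N * x (pred i) - x O * x i) / (x N - x O).
Definition Q_aff (x : nat -> R) (N i : nat) (t : R) : R :=
  x O + (x N - x O) * (t - x (pred i)) / (x i - x (pred i)).

(* seg x n t = the least i in {1,..,n} with t <= x i (n if none);
   for t in I this selects i with t in I_i = [x (i-1), x i]. *)
Fixpoint seg (x : nat -> R) (n : nat) (t : R) : nat :=
  match n with
  | O => 1%nat
  | S m => match m with
           | O => 1%nat
           | _ => if Rle_dec t (x m) then seg x m t else n
           end
  end.

Definition Top (x : nat -> R) (N : nat) (f : R -> R)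
  (alpha : nat -> nat -> R -> R) (b : nat -> R -> R) (r : nat)
  (g : R -> R) : R -> R :=
  fun t => let i := seg x N t in
    f t + alpha i r (Q_aff x N i t) * (g (Q_aff x N i t) - b r (Q_aff x N i t)).

Fixpoint Tcomp (x : nat -> R) (N : nat) (f : R -> R)
  (alpha : nat -> nat -> R -> R) (b : nat -> R -> R) (r : nat)
  (g : R -> R) : R -> R :=
  match r with
  | O => g
  | S r' => Tcomp x N f alpha b r' (Top x N f alpha b (S r') g)
  end.

Definition is_ns_fractal (x : nat -> R) (N : nat) (f : R -> R)
  (alpha : nat -> nat -> R -> R) (b : nat -> R -> R) (phi : R -> R) : Prop :=
  forall g, cont_on (x O) (x N) g -> g (x O) = f (x O) -> g (x N) = f (x N) ->
    forall eps, 0 < eps -> exists R0 : nat, forall r, (R0 <= r)%nat ->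
      forall t, inI (x O) (x N) t -> Rabs (Tcomp x N f alpha b r g t - phi t) < eps.

(* Main.v *)
Require Import Defs.
From Stdlib Require Import Reals Lra Lia Psatz.
Open Scope R_scope.

Lemma seg_spec (x : nat -> R) : forall n t, (1 <= n)%nat -> x O <= t <= x n ->
  (1 <= seg x n t <= n)%nat /\ x (pred (seg x n t)) <= t <= x (seg x n t).
Proof.
  induction n as [|m IH]; intros t Hn Ht; [lia|].
  destruct m as [|m'].
  - simpl. split; [lia| exact Ht].
  - change (seg x (S (S m')) t) with
      (if Rle_dec t (x (S m')) then seg x (S m') t else S (S m')).
    destruct (Rle_dec t (x (S m'))) as [Hle|Hnle].
    + destruct (IH t) as [H1 H2]; [lia|lra|]. split; [lia|exact H2].
    + simpl. split; [lia|lra].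
Qed.

Lemma part_le x N : partition x N -> forall n, (n <= N)%nat -> x O <= x n.
Proof.
  intros [_ Hp]. induction n; intros Hn; [lra|].
  specialize (IHn ltac:(lia)). specialize (Hp n ltac:(lia)). lra.
Qed.

Lemma bnd_mono a b g B B' : bnd_on a b g B -> B <= B' -> bnd_on a b g B'.
Proof. intros H HB t Ht. specialize (H t Ht). lra. Qed.

Lemma Q_in x N t : partition x N -> inI (x O) (x N) t ->
  (1 <= seg x N t <= N)%nat /\ inI (x O) (x N) (Q_aff x N (seg x N t) t).
Proof.
  intros Hp Ht. pose proof Hp as [HN Hpp].
  destruct (seg_spec x N t HN Ht) as [Hi Hb].
  split; [exact Hi|].
  set (i := seg x N t) in *.
  assert (Hlt : x (pred i) < x i).
  { replace i with (S (pred i)) at 2 by lia. apply Hpp. lia. }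
  assert (H0N : x O <= x N) by (apply (part_le x N Hp); lia).
  unfold Q_aff, inI.
  set (w := (t - x (pred i)) / (x i - x (pred i))).
  assert (Hw0 : 0 <= w) by (unfold w; unfold Rdiv; apply Rmult_le_pos; [lra| left; apply Rinv_0_lt_compat; lra]).
  assert (Hw1 : w <= 1).
  { unfold w. apply Rmult_le_reg_r with (x i - x (pred i)); [lra|].
    field_simplify; lra. }
  replace ((x N - x O) * (t - x (pred i)) / (x i - x (pred i))) with ((x N - x O) * w)
    by (unfold w; field; lra).
  split; nra.
Qed.

Lemma Tcomp_bnd x N f alpha b M s C B : partition x N -> 0 <= s ->
  (forall r i, (1 <= r)%nat -> (1 <= i <= N)%nat -> bnd_on (x O) (x N) (alpha i r) s) ->
  (forall r, (1 <= r)%nat -> bnd_on (x O) (x N) (b r) C) ->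
  bnd_on (x O) (x N) f B -> B + s * (M + C) <= M ->
  forall r g, bnd_on (x O) (x N) g M -> bnd_on (x O) (x N) (Tcomp x N f alpha b r g) M.
Proof.
  intros Hp Hs Ha Hb Hf HM r. induction r as [|r IH]; intros g Hg; [exact Hg|].
  simpl. apply IH. intros t Ht. unfold Top.
  destruct (Q_in x N t Hp Ht) as [Hi HQ].
  set (i := seg x N t) in *. set (q := Q_aff x N i t) in *.
  pose proof (Ha (S r) i ltac:(lia) Hi q HQ) as A.
  pose proof (Hb (S r) ltac:(lia) q HQ) as Bq.
  pose proof (Hg q HQ) as Gq. pose proof (Hf t Ht) as Ft.
  eapply Rle_trans; [apply Rabs_triang|].
  rewrite Rabs_mult.
  assert (Rabs (g q - b (S r) q) <= M + C).
  { unfold Rminus. eapply Rle_trans; [apply Rabs_triang|]. rewrite Rabs_Ropp. lra. }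
  assert (Rabs (alpha i (S r) q) * Rabs (g q - b (S r) q) <= s * (M + C)).
  { apply Rmult_le_compat; auto using Rabs_pos. }
  lra.
Qed.
Theorem mainTheorem5
  (x : nat -> R) (N : nat) (d : R)
  (alpha : nat -> nat -> R -> R) (L : nat -> (R -> R) -> (R -> R))
  (Hpart : partition x N)
  (Hd : 0 < d <= 1)
  (* scaling functions: continuous on I, with ||alpha||_oo < 1 *)
  (Halpha_cont : forall r i, (1 <= r)%nat -> (1 <= i <= N)%nat ->
      cont_on (x O) (x N) (alpha i r))
  (Halpha_bnd : exists s, s < 1 /\ forall r i, (1 <= r)%nat -> (1 <= i <= N)%nat ->
      bnd_on (x O) (x N) (alpha i r) s)
  (* L_r : Lip_d(I) -> Lip_d(I), preserving endpoint values *)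
  (HL_Lip : forall r g, (1 <= r)%nat -> Lip d (x O) (x N) g -> Lip d (x O) (x N) (L r g))
  (HL_end : forall r g, (1 <= r)%nat -> Lip d (x O) (x N) g ->
      L r g (x O) = g (x O) /\ L r g (x N) = g (x N))
  (* sup_r ||L_r||_oo < oo *)
  (HL_norm : exists K, forall r g, (1 <= r)%nat -> Lip d (x O) (x N) g ->
      (exists t, inI (x O) (x N) t /\ g t <> 0) ->
      forall B, bnd_on (x O) (x N) g B -> bnd_on (x O) (x N) (L r g) (K * B))
  (* the L_r are uniformly bounded *)
  (HL_unif : forall S : (R -> R) -> Prop,
      (forall g, S g -> Lip d (x O) (x N) g) -> bounded_set (x O) (x N) S ->
      exists C, forall r g, (1 <= r)%nat -> S g -> bnd_on (x O) (x N) (L r g) C) :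
  forall S : (R -> R) -> Prop,
    (forall f, S f -> Lip d (x O) (x N) f) -> bounded_set (x O) (x N) S ->
    exists M, forall f phi, S f -> is_ns_fractal x N f alpha (fun r => L r f) phi ->
      bnd_on (x O) (x N) phi M.
Proof.
  intros SS HS [B HB].
  destruct Halpha_bnd as [s [Hs1 Ha]].
  pose proof Hpart as [HN Hpp].
  assert (H0N : x O < x N).
  { assert (x O <= x (pred N)) by (apply (part_le x N Hpart); lia).
    assert (x (pred N) < x (S (pred N))) by (apply Hpp; lia).
    replace (S (pred N)) with N in * by lia. lra. }
  assert (Hs0 : 0 <= s).
  { pose proof (Ha 1%nat 1%nat ltac:(lia) ltac:(lia) (x O) ltac:(unfold inI; lra)).
    pose proof (Rabs_pos (alpha 1%nat 1%nat (x O))). lra. }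
  destruct (HL_unif SS HS (ex_intro _ B HB)) as [C HC].
  set (B0 := Rabs B). set (C0 := Rabs C).
  set (M := Rmax B0 ((B0 + s * C0) / (1 - s))).
  assert (HB0 : 0 <= B0) by apply Rabs_pos.
  assert (HC0 : 0 <= C0) by apply Rabs_pos.
  assert (HM1 : B0 <= M) by apply Rmax_l.
  assert (HM2 : (B0 + s * C0) / (1 - s) <= M) by apply Rmax_r.
  assert (HMc : B0 + s * (M + C0) <= M).
  { assert (E : (1 - s) * ((B0 + s * C0) / (1 - s)) = B0 + s * C0) by (field; lra).
    assert ((1 - s) * ((B0 + s * C0) / (1 - s)) <= (1 - s) * M)
      by (apply Rmult_le_compat_l; lra).
    nra. }
  exists (M + 1). intros f phi Sf Hphi t Ht.
  assert (HfB : bnd_on (x O) (x N) f B0)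
    by (apply bnd_mono with B; [apply HB, Sf| unfold B0; apply Rle_abs]).
  set (D := x N - x O).
  set (g := fun u => f (x O) * (1 - (u - x O) / D) + f (x N) * ((u - x O) / D)).
  assert (Hgc : cont_on (x O) (x N) g).
  { intros t0 _ eps Heps.
    set (k := (f (x N) - f (x O)) / D).
    exists (eps / (Rabs k + 1)). split.
    { apply Rdiv_lt_0_compat; [lra|]. pose proof (Rabs_pos k). lra. }
    intros u _ Hu.
    replace (g u - g t0) with (k * (u - t0)) by (unfold g, k; field; unfold D; lra).
    rewrite Rabs_mult.
    pose proof (Rabs_pos k). pose proof (Rabs_pos (u - t0)).
    assert (Rabs (u - t0) * (Rabs k + 1) < eps).
    { apply Rmult_lt_reg_r with (/ (Rabs k + 1)).
      apply Rinv_0_lt_compat; lra.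
      rewrite Rmult_assoc, Rinv_r by lra. lra. }
    nra. }
  assert (Hg0 : g (x O) = f (x O)) by (unfold g; field; unfold D; lra).
  assert (HgN : g (x N) = f (x N)) by (unfold g, D; field; lra).
  assert (Hgb : bnd_on (x O) (x N) g M).
  { intros u Hu. unfold inI in Hu.
    set (w := (u - x O) / D).
    assert (0 <= w) by (unfold w, D; unfold Rdiv; apply Rmult_le_pos; [lra| left; apply Rinv_0_lt_compat; lra]).
    assert (w <= 1).
    { unfold w, D. apply Rmult_le_reg_r with (x N - x O); [lra|]. field_simplify; lra. }
    unfold g. fold w.
    eapply Rle_trans; [apply Rabs_triang|]. rewrite !Rabs_mult.
    rewrite (Rabs_pos_eq w), (Rabs_pos_eq (1 - w)) by lra.
    pose proof (HfB (x O) ltac:(unfold inI; lra)).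
    pose proof (HfB (x N) ltac:(unfold inI; lra)).
    nra. }
  destruct (Hphi g Hgc Hg0 HgN 1 Rlt_0_1) as [R0 HR0].
  specialize (HR0 R0 (le_n _) t Ht).
  assert (Hb : forall r, (1 <= r)%nat -> bnd_on (x O) (x N) (L r f) C0).
  { intros r Hr. apply bnd_mono with C; [apply HC; auto| apply Rle_abs]. }
  pose proof (Tcomp_bnd x N f alpha (fun r => L r f) M s C0 B0 Hpart Hs0 Ha Hb HfB HMc R0 g Hgb t Ht).
  revert HR0 H. set (T := Tcomp _ _ _ _ _ _ _ _). intros.
  unfold Rabs in *. repeat destruct Rcase_abs; lra.
Qed.
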